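(* Let $\mathcal{H}_C$ and $\mathcal{H}_P$ be finite-dimensional complex Hilbert spaces and let $\rho$ be any (possibly mixed) state on $\mathcal{H}_C\otimes\mathcal{H}_P$. Then $\mathcal{D}(P|C)\le Q(\rho)$, i.e. the quantum discord of $\rho$ is at most its measurement-induced disturbance (for every admissible choice of eigenbases in the definition of $\Pi$).
   Context: All entropies are von Neumann entropies $S(\sigma)=-\mathrm{Tr}\,\sigma\ln\sigma$. For a state $\rho$ on $\mathcal{H}_C\otimes\mathcal{H}_P$ write $\rho_C=\mathrm{Tr}_P\rho$, $\rho_P=\mathrm{Tr}_C\rho$, $S(C)=S(\rho_C)$, $S(P,C)=S(\rho)$, $S(P|C)=S(P,C)-S(C)$, and mutual information $I(\rho)=S(\rho_C)+S(\rho_P)-S(\rho)$. Measurement-induced disturbance: write spectral decompositions $\rho_C=\sum_i p_C^i\Pi_C^i$ and $\rho_P=\sum_j p_P^j\Pi_P^j$ with $\{\Pi_C^i\}$, $\{\Pi_P^j\}$ rank-one projectors onto orthonormal eigenbases of $\rho_C$ and $\rho_P$; set $\Pi(\rho)=\sum_{i,j}(\Pi_C^i\otimes\Pi_P^j)\rho(\Pi_C^i\otimes\Pi_P^j)$ and $Q(\rho)=I(\rho)-I(\Pi(\rho))$. Quantum discord: for a rank-one projective measurement $\{N_j^C\}$ on $\mathcal{H}_C$, let $p_j=\mathrm{Tr}[(N_j^C\otimes\mathbb{1}_P)\rho]$, $\rho_{P|j}=\mathrm{Tr}_C[(N_j^C\otimes\mathbb{1}_P)\rho]/p_j$ for $p_j>0$,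 and $S(P|\{N_j^C\})=\sum_j p_jS(\rho_{P|j})$. Then $\mathcal{D}(P|C)=\min_{\{N_j^C\}}S(P|\{N_j^C\})-S(P|C)$, minimum over all rank-one projective measurements on $C$. *)

(* Defs.v *)
From HB Require Import structures.
From mathcomp Require Import all_boot all_order all_algebra.
From mathcomp Require Import sesquilinear spectral.
From mathcomp Require Import complex mxtens.
From mathcomp Require Import all_classical all_reals.
From mathcomp Require Import exp.

Set Implicit Arguments.
Unset Strict Implicit.
Unset Printing Implicit Defensive.

Import Order.TTheory GRing.Theory Num.Theory Num.Def.
Local Open Scope ring_scope.
Local Open Scope sesquilinear_scope.
Local Open Scope classical_set_scope.

Section QInfo.
Variable R : realType.
Local Notation C := R[i].

Definition adjmx m n (A : 'M[C]_(m, n)) : 'M[C]_(n, m) := A ^t conjC.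

Definition density n (rho : 'M[C]_n) : Prop :=
  rho \is hermsymmx /\
  (forall x : 'cV[C]_n, 0 <= (adjmx x *m rho *m x) 0 0) /\
  \tr rho = 1.

Definition eta (x : R) : R := if x == 0 then 0 else x * ln x.

(* von Neumann entropy S(s) = - Tr s ln s = - sum over eigenvalues lambda of
   lambda ln lambda; eigenvalues (with multiplicity) of the normal matrix s
   are the entries of the diagonal of its spectral decomposition
   s = P^-1 diag(spectral_diag s) P (P unitary). *)
Definition vN_entropy n (s : 'M[C]_n) : R :=
  - \sum_(i < n) eta (complex.Re (spectral_diag s 0 i)).

Definition ptrP nC nP (rho : 'M[C]_(nC * nP)) : 'M[C]_nC :=
  \matrix_(i, k) \sum_(j < nP) rho (mxtens_index (i, j)) (mxtens_index (k, j)).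
Definition ptrC nC nP (rho : 'M[C]_(nC * nP)) : 'M[C]_nP :=
  \matrix_(j, l) \sum_(i < nC) rho (mxtens_index (i, j)) (mxtens_index (i, l)).

Definition mutual_info nC nP (rho : 'M[C]_(nC * nP)) : R :=
  vN_entropy (ptrP rho) + vN_entropy (ptrC rho) - vN_entropy rho.

Definition orth_eigenbasis n (A U : 'M[C]_n) : Prop :=
  adjmx U *m U = 1%:M /\
  forall i : 'I_n, exists l : C, A *m col i U = l *: col i U.

Definition proj1 n (U : 'M[C]_n) (i : 'I_n) : 'M[C]_n :=
  col i U *m adjmx (col i U).

Definition Pi_meas nC nP (rho : 'M[C]_(nC * nP)) (U : 'M[C]_nC) (V : 'M[C]_nP)
  : 'M[C]_(nC * nP) :=
  \sum_(i < nC) \sum_(j < nP)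
     ((proj1 U i *t proj1 V j) *m rho *m (proj1 U i *t proj1 V j)).

Definition MID nC nP (rho : 'M[C]_(nC * nP)) (U : 'M[C]_nC) (V : 'M[C]_nP) : R :=
  mutual_info rho - mutual_info (Pi_meas rho U V).

Definition rank1_pvm n k (N : 'I_k -> 'M[C]_n) : Prop :=
  (forall j, N j \is hermsymmx /\ N j *m N j = N j /\ \rank (N j) = 1%N) /\
  \sum_(j < k) N j = 1%:M.

(* outcome probability p_j = Tr[(N_j (x) 1) rho] (real part; it is real) *)
Definition outcome_prob nC nP k (rho : 'M[C]_(nC * nP)) (N : 'I_k -> 'M[C]_nC)
  (j : 'I_k) : R :=
  complex.Re (\tr ((N j *t (1%:M : 'M[C]_nP)) *m rho)).

Definition post_state nC nP k (rho : 'M[C]_(nC * nP)) (N : 'I_k -> 'M[C]_nC)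
  (j : 'I_k) : 'M[C]_nP :=
  ((outcome_prob rho N j)%:C%C)^-1 *: ptrC ((N j *t (1%:M : 'M[C]_nP)) *m rho).

Definition cond_entropy_meas nC nP k (rho : 'M[C]_(nC * nP))
  (N : 'I_k -> 'M[C]_nC) : R :=
  \sum_(j < k | 0 < outcome_prob rho N j)
     outcome_prob rho N j * vN_entropy (post_state rho N j).

Definition cond_entropy nC nP (rho : 'M[C]_(nC * nP)) : R :=
  vN_entropy rho - vN_entropy (ptrP rho).

(* quantum discord D(P|C) = min_{N} S(P|{N}) - S(P|C); the minimum over all
   rank-one projective measurements on H_C is written as an infimum *)
Definition discord nC nP (rho : 'M[C]_(nC * nP)) : R :=
  inf [set x : R | exists k (N : 'I_k -> 'M[C]_nC),
          rank1_pvm N /\ x = cond_entropy_meas rho N]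
  - cond_entropy rho.

End QInfo.

(* Main.v *)
Require Import Defs.
From HB Require Import structures.
From mathcomp Require Import all_boot all_order all_algebra.
From mathcomp Require Import sesquilinear spectral.
From mathcomp Require Import complex mxtens.
From mathcomp Require Import all_classical all_reals.
From mathcomp Require Import exp.
From mathcomp Require Import ring lra.
Require Import Defs.
Set Implicit Arguments.
Unset Strict Implicit.
Unset Printing Implicit Defensive.
Import Order.TTheory GRing.Theory Num.Theory.
Local Open Scope ring_scope.

Section Real.
Variable R : realType.

Lemma eta_tangent (a y : R) : 0 < a -> 0 <= y -> y * ln a + y - a <= eta y.
Proof.
move=> a0; rewrite le_eqVlt => /orP[/eqP<-|y0].
  by rewrite /eta eqxx mul0r !add0r oppr_le0 ltW.
rewrite /eta gt_eqF //.
have h := @le_ln1Dx R (a / y - 1).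
have : -1 < a / y - 1 by have := divr_gt0 a0 y0; lra.
move=> /h; rewrite addrC subrK ln_div ?posrE // => H.
have := ler_wpM2l (ltW y0) H.
rewrite mulrBr mulrBr mulr1 mulrCA mulfV ?gt_eqF // mulr1.
lra.
Qed.

Lemma eta_jensen (I : finType) (c y : I -> R) :
  (forall k, 0 <= c k) -> (forall k, 0 <= y k) -> \sum_k c k = 1 ->
  eta (\sum_k c k * y k) <= \sum_k c k * eta (y k).
Proof.
move=> c0 y0 c1.
set m := \sum_k c k * y k.
have m0 : 0 <= m by apply: sumr_ge0 => k _; rewrite mulr_ge0.
case: (ltrP 0 m) => mp.
  apply: (@le_trans _ _ (\sum_k c k * (y k * ln m + y k - m))).
    rewrite (eq_bigr (fun k => (c k * y k) * ln m + c k * y k - c k * m)); last first.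
      by move=> k _; rewrite mulrBr mulrDr mulrA.
    rewrite sumrB big_split /= -mulr_suml -mulr_suml c1 mul1r /eta gt_eqF //.
    rewrite -/m mulrC; lra.
  by apply: ler_sum => k _; apply: ler_wpM2l => //; apply: eta_tangent.
have m00 : m = 0 by apply/le_anti; rewrite mp m0.
have : forall k, c k * y k = 0.
  move=> k; move/eqP: m00; rewrite psumr_eq0; last by move=> i _; rewrite mulr_ge0.
  by move=> /allP /(_ k (mem_index_enum _)) /eqP.
move=> h; rewrite m00 /eta eqxx; apply: sumr_ge0 => k _.
by case: eqP => _; rewrite ?mulr0 // mulrA h mul0r.
Qed.

Lemma eta_dstoch n (M : 'I_n -> 'I_n -> R) (r : 'I_n -> R) :
  (forall k j, 0 <= M k j) -> (forall k, \sum_j M k j = 1) ->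
  (forall j, \sum_k M k j = 1) -> (forall k, 0 <= r k) ->
  \sum_j eta (\sum_k M k j * r k) <= \sum_k eta (r k).
Proof.
move=> M0 Mr Mc r0.
apply: (@le_trans _ _ (\sum_j \sum_k M k j * eta (r k))).
  by apply: ler_sum => j _; apply: eta_jensen.
rewrite exchange_big /= le_eqVlt; apply/orP; left; apply/eqP/eq_bigr => k _.
by rewrite -mulr_suml Mr mul1r.
Qed.

Lemma eta_superadd (I : finType) (q : I -> R) : (forall k, 0 <= q k) ->
  \sum_k eta (q k) <= eta (\sum_k q k).
Proof.
move=> q0; set a := \sum_k q k.
have : forall k, eta (q k) <= q k * ln a.
  move=> k; rewrite /eta; case: eqP => [->|qn]; first by rewrite mul0r.
  have qp : 0 < q k by rewrite lt_def q0 andbT; apply/eqP.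
  apply: ler_wpM2l => //; rewrite ler_ln ?posrE //; last first.
    by apply: (lt_le_trans qp); rewrite /a (bigD1 k) //= lerDl sumr_ge0.
  by rewrite /a (bigD1 k) //= lerDl sumr_ge0.
move=> h; apply: (le_trans (ler_sum _ (fun k _ => h k))).
rewrite -mulr_suml -/a /eta; case: eqP => [->|_]; by rewrite ?mul0r.
Qed.
End Real.


Section Cx.
Variable R : realType.
Local Notation C := R[i].

Lemma ge0_realC (c : C) : 0 <= c -> c = (complex.Re c)%:C%C /\ 0 <= complex.Re c.
Proof.
rewrite lecE /= => /andP[/eqP Im0 Re0]; split => //.
by case: c Im0 Re0 => a b /= ->.
Qed.

Definition wt (z : C) : R := complex.Re (z * z^*).

Lemma wtE (z : C) : z * z^* = (wt z)%:C%C.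
Proof. by have [] := ge0_realC (mul_conjC_ge0 z). Qed.

Lemma wt_ge0 (z : C) : 0 <= wt z.
Proof. by have [] := ge0_realC (mul_conjC_ge0 z). Qed.

Lemma conjRC (x : R) : ((x%:C)%C : C)^* = (x%:C)%C.
Proof. exact: conjc_real. Qed.

Lemma wtC (z : C) : wt (z^*) = wt z.
Proof. by rewrite /wt conjCK mulrC. Qed.

Lemma adjmxM m n p (A : 'M[C]_(m, n)) (B : 'M[C]_(n, p)) :
  adjmx (A *m B) = adjmx B *m adjmx A.
Proof. by rewrite /adjmx trmx_mul map_mxM. Qed.

Lemma adjmxK m n (A : 'M[C]_(m, n)) : adjmx (adjmx A) = A.
Proof. by apply/matrixP => i j; rewrite !mxE conjCK. Qed.

Lemma adjmxE m n (A : 'M[C]_(m, n)) i j : adjmx A i j = (A j i)^*.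
Proof. by rewrite !mxE. Qed.

Lemma mx11M m (M : 'M[C]_(1, m)) (N : 'M[C]_(m, 1)) :
  (M *m N) 0 0 = \sum_k M 0 k * N k 0.
Proof. by rewrite mxE. Qed.

Lemma qf_diag n (s : 'rV[C]_n) (y : 'cV[C]_n) :
  (adjmx y *m diag_mx s *m y) 0 0 = \sum_k s 0 k * (y k 0 * (y k 0)^*).
Proof.
rewrite mxE; apply: eq_bigr => k _.
rewrite mul_mx_diag !mxE; ring.
Qed.

Lemma hermP n (A : 'M[C]_n) : (forall i j, A j i = (A i j)^*) -> A \is hermsymmx.
Proof.
move=> h; apply/is_hermitianmxP; rewrite expr0 scale1r.
by apply/matrixP => i j; rewrite !mxE h.
Qed.

Lemma unitary_sq n (W : 'M[C]_n) : adjmx W *m W = 1%:M -> W *m adjmx W = 1%:M.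
Proof. exact: mulmx1C. Qed.

Section Spec.
Variables (n : nat) (A : 'M[C]_n).
Hypothesis Aherm : A \is hermsymmx.
Let P := spectralmx A.
Let s := spectral_diag A.

Lemma specP1 : P *m adjmx P = 1%:M.
Proof. by apply/unitarymxP; apply: spectral_unitarymx. Qed.
Lemma specP2 : adjmx P *m P = 1%:M.
Proof. by apply: mulmx1C; apply: specP1. Qed.
Lemma specA : A = adjmx P *m diag_mx s *m P.
Proof.
have := (orthomx_spectralP (hermitian_normalmx Aherm)).
rewrite -/P -/s invmx_unitary ?spectral_unitarymx //.
Qed.

Lemma spec_qf (x : 'cV[C]_n) :
  (adjmx x *m A *m x) 0 0 = \sum_k s 0 k * ((P *m x) k 0 * ((P *m x) k 0)^*).
Proof.
rewrite {1}specA -qf_diag adjmxM !mulmxA; done.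
Qed.

Lemma spec_s k : s 0 k = (adjmx (col k (adjmx P)) *m A *m col k (adjmx P)) 0 0.
Proof.
rewrite spec_qf.
have -> : P *m col k (adjmx P) = col k 1%:M by rewrite !colE mulmxA specP1.
rewrite (bigD1 k) //= big1 ?addr0.
  by rewrite !mxE eqxx conjC1 !mulr1.
by move=> j jk; rewrite !mxE (negbTE jk) mul0r mulr0.
Qed.
End Spec.

Lemma dstoch_wt n (X : 'M[C]_n) : X *m adjmx X = 1%:M -> adjmx X *m X = 1%:M ->
  (forall k, \sum_j wt (X k j) = 1) /\ (forall j, \sum_k wt (X k j) = 1).
Proof.
move=> H1 H2; split.
  move=> k; apply: complexI; rewrite rmorph_sum /= rmorph1.
  have := congr1 (fun M : 'M[C]_n => M k k) H1; rewrite !mxE eqxx mulr1n => <-.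
  by apply: eq_bigr => j _; rewrite !mxE wtE.
move=> j; apply: complexI; rewrite rmorph_sum /= rmorph1.
have := congr1 (fun M : 'M[C]_n => M j j) H2; rewrite !mxE eqxx mulr1n => <-.
by apply: eq_bigr => k _; rewrite !mxE mulrC wtE.
Qed.

Lemma key1 n (A W : 'M[C]_n) : A \is hermsymmx ->
  (forall x : 'cV[C]_n, 0 <= (adjmx x *m A *m x) 0 0) -> adjmx W *m W = 1%:M ->
  vN_entropy A <= - \sum_j eta (complex.Re ((adjmx (col j W) *m A *m col j W) 0 0)).
Proof.
move=> Ah Apsd HW.
set P := spectralmx A; set s := spectral_diag A.
have sr k : s 0 k = (complex.Re (s 0 k))%:C%C /\ 0 <= complex.Re (s 0 k).
  by apply: ge0_realC; rewrite /s spec_s //; apply: Apsd.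
set X := P *m W.
have X1 : X *m adjmx X = 1%:M.
  by rewrite adjmxM mulmxA -(mulmxA P) (unitary_sq HW) mulmx1 specP1.
have X2 : adjmx X *m X = 1%:M.
  by rewrite adjmxM mulmxA -(mulmxA _ (adjmx P)) specP2 // mulmx1.
have [Xr Xc] := dstoch_wt X1 X2.
have dE j : complex.Re ((adjmx (col j W) *m A *m col j W) 0 0) =
    \sum_k wt (X k j) * complex.Re (s 0 k).
  rewrite spec_qf //.
  have -> : spectralmx A *m col j W = col j X by rewrite !colE mulmxA.
  rewrite (eq_bigr (fun k => (wt (X k j) * complex.Re (s 0 k))%:C%C)).
    by rewrite -rmorph_sum.
  by move=> k _; rewrite !mxE wtE {1}(sr k).1 -rmorphM mulrC.
rewrite /vN_entropy lerN2; under eq_bigr => j _ do rewrite dE.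
apply: (@eta_dstoch R n (fun k j => wt (X k j))) => //.
- by move=> k j; apply: wt_ge0.
- by move=> k; case: (sr k).
Qed.


Lemma mx11E (M : 'M[C]_(1,1)) (N : 'M[C]_(1,1)) : (M *m N) 0 0 = M 0 0 * N 0 0.
Proof. by rewrite mxE big_ord1. Qed.

Lemma adjcolE n (W : 'M[C]_n) j k :
  (adjmx (col j W) *m col k W) 0 0 = (adjmx W *m W) j k.
Proof. by rewrite !mxE; apply: eq_bigr => l _; rewrite !mxE. Qed.

Lemma adjcol_conj n (x y : 'cV[C]_n) :
  (adjmx y *m x) 0 0 = ((adjmx x *m y) 0 0)^*.
Proof.
rewrite !mxE rmorph_sum; apply: eq_bigr => l _; rewrite !mxE rmorphM /= conjCK.
by rewrite mulrC.
Qed.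

Section Key2.
Variables (n : nat) (W : 'M[C]_n) (d : 'I_n -> R).
Hypothesis HW : adjmx W *m W = 1%:M.
Hypothesis d0 : forall k, 0 <= d k.
Let A := \sum_k (d k)%:C%C *: (col k W *m adjmx (col k W)).

Lemma qfA (x y : 'M[C]_(n, 1)) : (adjmx x *m A *m y) 0 0 =
  \sum_k (d k)%:C%C * ((adjmx x *m col k W) 0 0 * (adjmx (col k W) *m y) 0 0).
Proof.
rewrite /A mulmx_sumr mulmx_suml summxE; apply: eq_bigr => k _.
by rewrite -scalemxAr -scalemxAl mxE !mulmxA -[adjmx x *m col k W *m _ *m y]mulmxA mx11E.
Qed.

Lemma A_herm : A \is hermsymmx.
Proof.
apply: hermP => i j; rewrite /A !summxE rmorph_sum; apply: eq_bigr => k _.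
rewrite !mxE !big_ord1 !mxE rmorphM rmorphM /= conjCK.
have -> : ((d k)%:C%C)^* = (d k)%:C%C by exact: conjc_real.
ring.
Qed.

Lemma A_psd (x : 'cV[C]_n) : 0 <= (adjmx x *m A *m x) 0 0.
Proof.
rewrite qfA; apply: sumr_ge0 => k _.
rewrite [(adjmx (col k W) *m x) 0 0]adjcol_conj wtE -rmorphM ler0c.
by rewrite mulr_ge0 // wt_ge0.
Qed.

Lemma A_diag j : (adjmx (col j W) *m A *m col j W) 0 0 = (d j)%:C%C.
Proof.
rewrite qfA (bigD1 j) //= big1 ?addr0.
  by rewrite !adjcolE HW !mxE eqxx mulr1n !mulr1.
by move=> k kj; rewrite adjcolE HW !mxE eq_sym (negbTE kj) mulr0n mul0r mulr0.
Qed.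

Lemma key2 : vN_entropy A = - \sum_k eta (d k).
Proof.
apply/le_anti/andP; split.
  have := key1 A_herm A_psd HW.
  by under eq_bigr => j _ do rewrite A_diag.
set P := spectralmx A; set s := spectral_diag A.
set X := P *m W.
have X1 : X *m adjmx X = 1%:M.
  by rewrite adjmxM mulmxA -(mulmxA P) (unitary_sq HW) mulmx1 specP1.
have X2 : adjmx X *m X = 1%:M.
  by rewrite adjmxM mulmxA -(mulmxA _ (adjmx P)) specP2 ?A_herm // mulmx1.
have [Xr Xc] := dstoch_wt X1 X2.
have sE k : s 0 k = (\sum_j wt (X k j) * d j)%:C%C.
  rewrite /s spec_s ?A_herm // qfA rmorph_sum; apply: eq_bigr => j _.
  have h : (adjmx (col k (adjmx P)) *m col j W) 0 0 = X k j.
    by rewrite !mxE; apply: eq_bigr => l _; rewrite !mxE conjCK.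
  by rewrite [(adjmx (col j W) *m _) 0 0]adjcol_conj h wtE -!rmorphM mulrC.
rewrite /vN_entropy lerN2.
under eq_bigr => k _ do rewrite sE /=.
apply: (@eta_dstoch R n (fun j k => wt (X k j))) => //.
by move=> j k; apply: wt_ge0.
Qed.

End Key2.

End Cx.


Section Tens.
Variable R : realType.
Local Notation C := R[i].

Lemma sum_tens (T : nmodType) n m (F : 'I_(n * m) -> T) :
  \sum_k F k = \sum_(i < n) \sum_(j < m) F (mxtens_index (i, j)).
Proof.
rewrite pair_big /= (reindex (@mxtens_index n m)) /=; last first.
  by exists (@mxtens_unindex n m) => k _; rewrite (mxtens_indexK, mxtens_unindexK).
by apply: eq_bigr => -[i j] _.
Qed.

Lemma tensE n1 n2 m1 m2 (A : 'M[C]_(n1, n2)) (B : 'M[C]_(m1, m2)) i j k l :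
  (A *t B) (mxtens_index (i, j)) (mxtens_index (k, l)) = A i k * B j l.
Proof. exact: tensmxE. Qed.

Lemma adjmx_tens n1 n2 m1 m2 (A : 'M[C]_(n1, n2)) (B : 'M[C]_(m1, m2)) :
  adjmx (A *t B) = adjmx A *t adjmx B.
Proof.
apply/matrixP => a b.
case: (mxtens_indexP a) => i j; case: (mxtens_indexP b) => k l.
by rewrite adjmxE !tensE !adjmxE rmorphM.
Qed.

Lemma tens11 n m : (1%:M : 'M[C]_n) *t (1%:M : 'M[C]_m) = 1%:M.
Proof.
apply/matrixP => a b.
case: (mxtens_indexP a) => i j; case: (mxtens_indexP b) => k l.
rewrite tensE !mxE (inj_eq (can_inj (@mxtens_indexK n m))) xpair_eqE.
by rewrite -natrM mulnb.
Qed.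

Lemma tens_unitary n m (U : 'M[C]_n) (V : 'M[C]_m) :
  adjmx U *m U = 1%:M -> adjmx V *m V = 1%:M -> adjmx (U *t V) *m (U *t V) = 1%:M.
Proof. by move=> hU hV; rewrite adjmx_tens tensmx_mul hU hV tens11. Qed.

Section TV.
Variables n m : nat.
Definition tv (x : 'cV[C]_n) (y : 'cV[C]_m) : 'cV[C]_(n * m) :=
  \col_k (x (mxtens_unindex k).1 0 * y (mxtens_unindex k).2 0).

Lemma tvE x y a b : tv x y (mxtens_index (a, b)) 0 = x a 0 * y b 0.
Proof. by rewrite !mxE mxtens_indexK. Qed.

Lemma colW (U : 'M[C]_n) (V : 'M[C]_m) i j :
  col (mxtens_index (i, j)) (U *t V) = tv (col i U) (col j V).
Proof.
apply/matrixP => a b; rewrite [b]ord1.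
by case: (mxtens_indexP a) => k l; rewrite tvE !mxE !mxtens_indexK.
Qed.

Lemma proj_tens (U : 'M[C]_n) (V : 'M[C]_m) i j
  (w := col (mxtens_index (i, j)) (U *t V)) :
  proj1 U i *t proj1 V j = w *m adjmx w.
Proof.
rewrite /w colW; apply/matrixP => a b.
case: (mxtens_indexP a) => k l; case: (mxtens_indexP b) => k' l'.
rewrite tensE !mxE !big_ord1 !mxE !mxtens_indexK /= rmorphM; ring.
Qed.

Lemma tens_suml (I : finType) p q r t (F : I -> 'M[C]_(p, q)) (B : 'M[C]_(r, t)) :
  (\sum_i F i) *t B = \sum_i (F i *t B).
Proof.
apply/matrixP => a b; rewrite !mxE !summxE mulr_suml.
by apply: eq_bigr => i _; rewrite !mxE.
Qed.

Lemma tens_sumr (I : finType) p q r t (A : 'M[C]_(p, q)) (F : I -> 'M[C]_(r, t)) :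
  A *t (\sum_i F i) = \sum_i (A *t F i).
Proof.
apply/matrixP => a b; rewrite !mxE !summxE mulr_sumr.
by apply: eq_bigr => i _; rewrite !mxE.
Qed.

Lemma ptrP_sum (I : finType) (F : I -> 'M[C]_(n * m)) :
  ptrP (\sum_i F i) = \sum_i ptrP (F i).
Proof.
apply/matrixP => a c; rewrite !mxE summxE.
under eq_bigr do rewrite summxE.
rewrite exchange_big; apply: eq_bigr => i _; by rewrite mxE.
Qed.

Lemma ptrC_sum (I : finType) (F : I -> 'M[C]_(n * m)) :
  ptrC (\sum_i F i) = \sum_i ptrC (F i).
Proof.
apply/matrixP => a c; rewrite !mxE summxE.
under eq_bigr do rewrite summxE.
rewrite exchange_big; apply: eq_bigr => i _; by rewrite mxE.
Qed.

Lemma ptrP_scale c (M : 'M[C]_(n * m)) : ptrP (c *: M) = c *: ptrP M.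
Proof.
apply/matrixP => a b; rewrite !mxE mulr_sumr.
by apply: eq_bigr => i _; rewrite !mxE.
Qed.

Lemma ptrC_scale c (M : 'M[C]_(n * m)) : ptrC (c *: M) = c *: ptrC M.
Proof.
apply/matrixP => a b; rewrite !mxE mulr_sumr.
by apply: eq_bigr => i _; rewrite !mxE.
Qed.

Lemma ptrP_ww (U : 'M[C]_n) (V : 'M[C]_m) i j
  (w := col (mxtens_index (i, j)) (U *t V)) :
  adjmx V *m V = 1%:M ->
  ptrP (w *m adjmx w) = col i U *m adjmx (col i U).
Proof.
move=> HV; rewrite /w colW; apply/matrixP => a c.
rewrite !mxE big_ord1.
have := congr1 (fun M : 'M[C]_m => M j j) HV; rewrite !mxE eqxx mulr1n => h.
rewrite -[RHS]mulr1 -h mulr_sumr; apply: eq_bigr => b _.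
rewrite !mxE big_ord1 !tvE !mxE rmorphM !mxtens_indexK /=; ring.
Qed.

Lemma ptrC_ww (U : 'M[C]_n) (V : 'M[C]_m) i j
  (w := col (mxtens_index (i, j)) (U *t V)) :
  adjmx U *m U = 1%:M ->
  ptrC (w *m adjmx w) = col j V *m adjmx (col j V).
Proof.
move=> HU; rewrite /w colW; apply/matrixP => a c.
rewrite !mxE big_ord1.
have := congr1 (fun M : 'M[C]_n => M i i) HU; rewrite !mxE eqxx mulr1n => h.
rewrite -[RHS]mulr1 -h mulr_sumr; apply: eq_bigr => b _.
rewrite !mxE big_ord1 !tvE !mxE rmorphM !mxtens_indexK /=; ring.
Qed.
End TV.


Lemma sum_delta (T : nmodType) p (F : 'I_p -> T) k :
  \sum_b F b *+ (b == k) = F k.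
Proof.
rewrite (bigD1 k) //= eqxx mulr1n big1 ?addr0 //.
by move=> b /negbTE ->; rewrite mulr0n.
Qed.

Lemma sum_deltaL (T : nmodType) p (F : 'I_p -> T) k :
  \sum_b F b *+ (k == b) = F k.
Proof. by under eq_bigr => b _ do rewrite eq_sym; apply: sum_delta. Qed.

Lemma sandwich N (w : 'cV[C]_N) (M : 'M[C]_N) :
  (w *m adjmx w) *m M *m (w *m adjmx w) =
  ((adjmx w *m M *m w) 0 0) *: (w *m adjmx w).
Proof.
have e : w *m adjmx w *m M *m (w *m adjmx w) = w *m (adjmx w *m M *m w) *m adjmx w.
  by rewrite !mulmxA.
rewrite e.
have h : adjmx w *m M *m w = ((adjmx w *m M *m w) 0 0)%:M by apply: mx11_scalar.
by rewrite {1}h mul_mx_scalar -scalemxAl.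
Qed.

Lemma trace_ww N (w : 'cV[C]_N) (M : 'M[C]_N) :
  \tr (w *m adjmx w *m M) = (adjmx w *m M *m w) 0 0.
Proof. by rewrite -mulmxA mxtrace_mulC /mxtrace big_ord1. Qed.

Lemma sum_proj N (U : 'M[C]_N) : adjmx U *m U = 1%:M -> \sum_i proj1 U i = 1%:M.
Proof.
move=> /unitary_sq <-; apply/matrixP => a c; rewrite summxE !mxE.
by apply: eq_bigr => i _; rewrite !mxE big_ord1 !mxE.
Qed.

Section Y.
Variables n m : nat.
Definition Ymx (x : 'cV[C]_n) : 'M[C]_(n * m, m) :=
  \matrix_(a, l) (x (mxtens_unindex a).1 0 *+ ((mxtens_unindex a).2 == l)).

Lemma YE x a b l : Ymx x (mxtens_index (a, b)) l = x a 0 *+ (b == l).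
Proof. by rewrite mxE mxtens_indexK. Qed.

Lemma Ytv (x : 'cV[C]_n) (z : 'cV[C]_m) : Ymx x *m z = tv x z.
Proof.
apply/matrixP => a t; rewrite [t]ord1.
case: (mxtens_indexP a) => i j; rewrite tvE mxE.
under eq_bigr => l _ do rewrite YE mulrnAl.
by rewrite sum_deltaL.
Qed.

Lemma ptrC_Y (x : 'cV[C]_n) (M : 'M[C]_(n * m)) :
  ptrC (((x *m adjmx x) *t (1%:M : 'M[C]_m)) *m M) = adjmx (Ymx x) *m M *m Ymx x.
Proof.
apply/matrixP => k l; rewrite !mxE.
rewrite sum_tens.
under [RHS]eq_bigr => c _ do (under eq_bigr => d _ do rewrite YE mulrnAr; rewrite sum_delta).
apply: eq_bigr => c _.
rewrite !mxE !sum_tens mulr_suml; apply: eq_bigr => a _.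
rewrite mulr_suml.
under eq_bigr => b _ do rewrite tensE !mxE.
under [RHS]eq_bigr => b _ do rewrite !mxE mxtens_indexK /=.
apply: eq_bigr => b _; rewrite big_ord1 !mxE.
have [->|nb] := eqVneq b k.
  by rewrite mulr1 mulr1n; ring.
by rewrite mulr0 mulr0n conjC0 !mul0r.
Qed.
End Y.

Lemma proj1_herm N (U : 'M[C]_N) i : proj1 U i \is hermsymmx.
Proof.
apply: hermP => a b; rewrite !mxE !big_ord1 !mxE rmorphM /= conjCK.
by rewrite mulrC.
Qed.

Lemma proj1_ip N (U : 'M[C]_N) i : adjmx U *m U = 1%:M ->
  adjmx (col i U) *m col i U = 1%:M.
Proof.
move=> HU; apply/matrixP => a b; rewrite [a]ord1 [b]ord1.
have := congr1 (fun M : 'M[C]_N => M i i) HU; rewrite !mxE eqxx mulr1n => <-.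
by apply: eq_bigr => k _; rewrite !mxE.
Qed.

Lemma eig_decomp N (A U : 'M[C]_N) : orth_eigenbasis A U ->
  A = \sum_i ((adjmx (col i U) *m A *m col i U) 0 0) *: (col i U *m adjmx (col i U)).
Proof.
case=> HU Heig.
have e i : A *m col i U = ((adjmx (col i U) *m A *m col i U) 0 0) *: col i U.
  have [l hl] := Heig i.
  by rewrite -mulmxA hl -scalemxAr mxE proj1_ip // mxE eqxx mulr1n mulr1.
rewrite -[A in LHS]mulmx1 -(sum_proj HU) mulmx_sumr; apply: eq_bigr => i _.
by rewrite /proj1 mulmxA e -scalemxAl.
Qed.

Lemma proj1_idem N (U : 'M[C]_N) i : adjmx U *m U = 1%:M ->
  proj1 U i *m proj1 U i = proj1 U i.
Proof.
move=> HU; rewrite /proj1.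
have -> : col i U *m adjmx (col i U) *m (col i U *m adjmx (col i U)) =
  col i U *m (adjmx (col i U) *m col i U) *m adjmx (col i U) by rewrite !mulmxA.
by rewrite proj1_ip // mulmx1.
Qed.

Lemma proj1_rank N (U : 'M[C]_N) i : adjmx U *m U = 1%:M ->
  \rank (proj1 U i) = 1%N.
Proof.
move=> HU; apply/eqP; rewrite eqn_leq mulmx_max_rank /= lt0n mxrank_eq0.
apply/eqP => h; have := congr1 mxtrace h.
rewrite /proj1 mxtrace_mulC proj1_ip // mxtrace0 mxtrace1 => /eqP.
by rewrite oner_eq0.
Qed.

Lemma proj1_pvm N (U : 'M[C]_N) : adjmx U *m U = 1%:M -> rank1_pvm (proj1 U).
Proof.
move=> HU; split; last exact: sum_proj.
by move=> j; split; [exact: proj1_herm | split; [exact: proj1_idem | exact: proj1_rank]].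
Qed.

Lemma adj_herm N (A : 'M[C]_N) : A \is hermsymmx -> adjmx A = A.
Proof. by move=> /is_hermitianmxP; rewrite expr0 scale1r => h; rewrite {2}h. Qed.

Lemma herm_adj N (A : 'M[C]_N) : adjmx A = A -> A \is hermsymmx.
Proof.
move=> h; apply: hermP => i j.
by rewrite -{1}h adjmxE.
Qed.

Lemma adjmx_scaleR p q (c : R) (A : 'M[C]_(p, q)) :
  adjmx ((c%:C)%C *: A) = (c%:C)%C *: adjmx A.
Proof. by apply/matrixP => i j; rewrite !mxE rmorphM /= conjRC. Qed.

Section TRP.
Variables n m : nat.
Lemma TRP (A : 'M[C]_n) (M : 'M[C]_(n * m)) :
  \tr (A *m ptrP M) = \tr ((A *t (1%:M : 'M[C]_m)) *m M).
Proof.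
rewrite /mxtrace sum_tens; apply: eq_bigr => a _.
rewrite mxE.
under eq_bigr => c _ do rewrite mxE mulr_sumr.
rewrite exchange_big /=; apply: eq_bigr => b _.
rewrite mxE sum_tens; apply: eq_bigr => c _.
under eq_bigr => d _ do rewrite tensE !mxE mulrnAr mulrnAl.
by rewrite sum_deltaL mulr1.
Qed.

Lemma tr_Pi1 (U : 'M[C]_n) (V : 'M[C]_m) (M : 'M[C]_(n * m)) i :
  adjmx V *m V = 1%:M ->
  \tr ((proj1 U i *t 1%:M) *m M) =
  \sum_j (adjmx (col (mxtens_index (i, j)) (U *t V)) *m M *m
          col (mxtens_index (i, j)) (U *t V)) 0 0.
Proof.
move=> HV; rewrite -(sum_proj HV) tens_sumr mulmx_suml raddf_sum.
apply: eq_bigr => j _; rewrite proj_tens; exact: trace_ww.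
Qed.
End TRP.

End Tens.


Section Main.
Variable R : realType.
Local Notation C := R[i].
Variables (n m : nat) (rho : 'M[C]_(n * m)) (U : 'M[C]_n) (V : 'M[C]_m).
Hypothesis Hd : density rho.
Hypothesis HU : orth_eigenbasis (ptrP rho) U.
Hypothesis HV : orth_eigenbasis (ptrC rho) V.

Let HU1 : adjmx U *m U = 1%:M. Proof. by case: HU. Qed.
Let HV1 : adjmx V *m V = 1%:M. Proof. by case: HV. Qed.
Let rho_herm : rho \is hermsymmx. Proof. by case: Hd. Qed.
Let rho_psd : forall x : 'cV[C]_(n * m), 0 <= (adjmx x *m rho *m x) 0 0.
Proof. by case: Hd => _ []. Qed.

Definition qq k : R :=
  complex.Re ((adjmx (col k (U *t V)) *m rho *m col k (U *t V)) 0 0).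

Lemma qCE k : (adjmx (col k (U *t V)) *m rho *m col k (U *t V)) 0 0 = (qq k)%:C%C.
Proof. by have [] := ge0_realC (rho_psd (col k (U *t V))). Qed.

Lemma qq_ge0 k : 0 <= qq k.
Proof. by have [] := ge0_realC (rho_psd (col k (U *t V))). Qed.

Definition aa i : R := \sum_j qq (mxtens_index (i, j)).

Lemma Pi_E : Pi_meas rho U V =
  \sum_k (qq k)%:C%C *: (col k (U *t V) *m adjmx (col k (U *t V))).
Proof.
rewrite /Pi_meas [RHS]sum_tens; apply: eq_bigr => i _; apply: eq_bigr => j _.
by rewrite proj_tens sandwich qCE.
Qed.

Lemma S_Pi : vN_entropy (Pi_meas rho U V) = - \sum_k eta (qq k).
Proof.
rewrite Pi_E; apply: key2; first exact: tens_unitary.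
exact: qq_ge0.
Qed.

Lemma trPi i : \tr ((proj1 U i *t 1%:M) *m rho) = (aa i)%:C%C.
Proof.
rewrite (tr_Pi1 _ _ _ HV1) /aa rmorph_sum; apply: eq_bigr => j _.
by rewrite qCE.
Qed.

Lemma rhoC_E : ptrP rho = \sum_i (aa i)%:C%C *: (col i U *m adjmx (col i U)).
Proof.
rewrite {1}(eig_decomp HU); apply: eq_bigr => i _; congr (_ *: _).
by rewrite -trace_ww TRP trPi.
Qed.

Lemma PiC : ptrP (Pi_meas rho U V) = ptrP rho.
Proof.
rewrite rhoC_E Pi_E ptrP_sum sum_tens; apply: eq_bigr => i _.
rewrite /aa rmorph_sum scaler_suml; apply: eq_bigr => j _.
by rewrite ptrP_scale ptrP_ww.
Qed.

Definition bb j : R := \sum_i qq (mxtens_index (i, j)).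

Lemma rhoP_E : ptrC rho = \sum_j (bb j)%:C%C *: (col j V *m adjmx (col j V)).
Proof.
rewrite {1}(eig_decomp HV); apply: eq_bigr => j _; congr (_ *: _).
have e : rho = \sum_i ((proj1 U i *t 1%:M) *m rho).
  by rewrite -mulmx_suml -tens_suml sum_proj // tens11 mul1mx.
rewrite {1}e ptrC_sum mulmx_sumr mulmx_suml summxE /bb rmorph_sum.
apply: eq_bigr => i _; rewrite /proj1 ptrC_Y.
have -> : adjmx (col j V) *m (adjmx (Ymx m (col i U)) *m rho *m Ymx m (col i U))
   *m col j V = adjmx (Ymx m (col i U) *m col j V) *m rho *m (Ymx m (col i U) *m col j V).
  by rewrite adjmxM !mulmxA.
by rewrite Ytv -colW qCE.
Qed.

Lemma PiP : ptrC (Pi_meas rho U V) = ptrC rho.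
Proof.
rewrite rhoP_E Pi_E ptrC_sum sum_tens exchange_big /=; apply: eq_bigr => j _.
rewrite /bb rmorph_sum scaler_suml; apply: eq_bigr => i _.
by rewrite ptrC_scale ptrC_ww.
Qed.

Lemma outcomeE i : outcome_prob rho (proj1 U) i = aa i.
Proof. by rewrite /outcome_prob trPi. Qed.

Lemma postE i : post_state rho (proj1 U) i =
  ((aa i)^-1)%:C%C *: (adjmx (Ymx m (col i U)) *m rho *m Ymx m (col i U)).
Proof. by rewrite /post_state outcomeE /proj1 ptrC_Y fmorphV. Qed.

Lemma post_herm i : post_state rho (proj1 U) i \is hermsymmx.
Proof.
rewrite postE; apply: herm_adj.
by rewrite adjmx_scaleR !adjmxM adjmxK (adj_herm rho_herm) mulmxA.
Qed.

Lemma post_psd i : 0 < aa i -> forall z : 'cV[C]_m,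
  0 <= (adjmx z *m post_state rho (proj1 U) i *m z) 0 0.
Proof.
move=> ha z; rewrite postE -scalemxAr -scalemxAl mxE.
have -> : adjmx z *m (adjmx (Ymx m (col i U)) *m rho *m Ymx m (col i U)) *m z =
  adjmx (Ymx m (col i U) *m z) *m rho *m (Ymx m (col i U) *m z).
  by rewrite adjmxM !mulmxA.
by rewrite mulr_ge0 // ?ler0c ?invr_ge0 ?ltW.
Qed.

Lemma post_diag i j :
  complex.Re ((adjmx (col j V) *m post_state rho (proj1 U) i *m col j V) 0 0) =
  (aa i)^-1 * qq (mxtens_index (i, j)).
Proof.
rewrite postE -scalemxAr -scalemxAl mxE.
have -> : adjmx (col j V) *m (adjmx (Ymx m (col i U)) *m rho *m Ymx m (col i U))
   *m col j V = adjmx (Ymx m (col i U) *m col j V) *m rho *m (Ymx m (col i U) *m col j V).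
  by rewrite adjmxM !mulmxA.
by rewrite Ytv -colW qCE -rmorphM.
Qed.

Lemma post_key i : 0 < aa i ->
  vN_entropy (post_state rho (proj1 U) i) <=
  - \sum_j eta ((aa i)^-1 * qq (mxtens_index (i, j))).
Proof.
move=> ha; have := key1 (post_herm i) (post_psd ha) HV1.
by under eq_bigr => j _ do rewrite post_diag.
Qed.


Lemma eta_scale (p q : R) : 0 < p -> 0 <= q -> p * eta (p^-1 * q) = eta q - q * ln p.
Proof.
move=> p0; rewrite le_eqVlt => /orP[/eqP<-|q0].
  by rewrite mulr0 /eta eqxx mulr0 mul0r subr0.
have pq : 0 < p^-1 * q by rewrite mulr_gt0 ?invr_gt0.
rewrite /eta !gt_eqF // lnM ?posrE ?invr_gt0 // lnV ?posrE //.
rewrite !mulrA mulfV ?gt_eqF // mul1r; ring.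
Qed.

Lemma aa_ge0 i : 0 <= aa i.
Proof. by apply: sumr_ge0 => j _; apply: qq_ge0. Qed.

Lemma term_bound i : 0 < aa i ->
  aa i * vN_entropy (post_state rho (proj1 U) i) <=
  eta (aa i) - \sum_j eta (qq (mxtens_index (i, j))).
Proof.
move=> ha.
apply: (le_trans (ler_wpM2l (ltW ha) (post_key ha))).
rewrite mulrN mulr_sumr.
have h j := eta_scale ha (qq_ge0 (mxtens_index (i, j))).
under eq_bigr => j _ do rewrite h.
rewrite sumrB -mulr_suml.
have -> : eta (aa i) = aa i * ln (aa i) by rewrite /eta gt_eqF.
rewrite -/(aa i); lra.
Qed.

Lemma main : discord rho <= MID rho U V.
Proof.
rewrite /discord /MID /mutual_info /cond_entropy PiC PiP S_Pi.
set E := (X in inf X - _).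
set v := cond_entropy_meas rho (proj1 U).
set T := \sum_i (eta (aa i) - \sum_j eta (qq (mxtens_index (i, j)))).
have Ev : E v by exists n, (proj1 U); split => //; exact: proj1_pvm.
have T0 : 0 <= T.
  apply: sumr_ge0 => i _; rewrite subr_ge0.
  exact: (eta_superadd (fun j => qq_ge0 (mxtens_index (i, j)))).
have vT : v <= T.
  rewrite /v /cond_entropy_meas.
  rewrite (eq_bigl (fun i => 0 < aa i)); last by move=> i; rewrite outcomeE.
  under eq_bigr => i _ do rewrite outcomeE.
  apply: (le_trans (ler_sum _ (fun i hi => term_bound hi))).
  rewrite [X in X <= _]big_mkcond; apply: ler_sum => i _.
  case: ifP => _ //; rewrite subr_ge0.
  exact: (eta_superadd (fun j => qq_ge0 (mxtens_index (i, j)))).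
have infT : inf E <= T.
  case: (pselect (has_lbound E)) => hl.
    exact: le_trans (ge_inf hl Ev) vT.
  by rewrite inf_out // => -[].
have SC : vN_entropy (ptrP rho) = - \sum_i eta (aa i).
  by rewrite rhoC_E; apply: key2 => //; apply: aa_ge0.
have ST : \sum_k eta (qq k) = \sum_i \sum_j eta (qq (mxtens_index (i, j))).
  by rewrite sum_tens.
have TE : T = \sum_i eta (aa i) - \sum_i \sum_j eta (qq (mxtens_index (i, j))).
  by rewrite /T sumrB.
rewrite SC ST; rewrite TE in infT; lra.
Qed.

End Main.

Theorem theorem2 (R : realType) (nC nP : nat) (rho : 'M[R[i]]_(nC * nP))
  (U : 'M[R[i]]_nC) (V : 'M[R[i]]_nP) :
  density rho ->
  orth_eigenbasis (ptrP rho) U ->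
  orth_eigenbasis (ptrC rho) V ->
  discord rho <= MID rho U V.
Proof. by move=> Hd HU HV; apply: main. Qed.
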